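(* In the PIR-PSI under a storage constraint problem described in the context, fix $N$, $K$ and the cache size $S$. Among all caching schemes, i.e., all $M$ with $S\le M\le K$ and all $(r_1,\dots,r_M)\in[0,1]^M$ with $\sum_{i=1}^M r_i=S$, the uniform caching scheme with $M=K$ (caching the first $\frac{S}{K}L$ symbols of every message) achieves the lowest optimal normalized download cost.
   Context: Model: $N$ non-communicating databases each store the same $K$ independent messages $W_1,\dots,W_K$ of $L$ symbols each. The user has a cache of $SL$ symbols, $S\in[0,K]$. It accesses a random set $\mathbb{H}$ of $M$ messages ($S\le M\le K$) and caches the first $Lr_i$ symbols of the $i$-th accessed message, $\sum_i r_i=S$. The databases know $M$ and $(r_1,\dots,r_M)$ but not $\mathbb{H}$. The user wants $W_\theta$, sends queries independent of the messages, each database answers with a deterministic function of its query and the messages; the user must decode $W_\theta$ with error entropy $o(L)$, and each database's joint distribution of (query, answer, messages) must not depend on $(\theta,\mathbb{H})$. Download $D=\sum_n H(A_n)$, and $D^*=\inf D/L$ over achievable schemes; for a caching scheme with $r_1\ge\dots\ge r_M$, $D^*=1+\frac1N+\dots+\frac1{N^{K-1-M}}+\sum_{j=1}^{M}\frac{1-r_j}{N^{K-j}}$. *)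

(* Defs.v *)
From HB Require Import structures.
From mathcomp Require Import all_boot all_order all_algebra.
Set Implicit Arguments. Unset Strict Implicit. Unset Printing Implicit Defensive.
Import Order.TTheory GRing.Theory Num.Theory.
Local Open Scope ring_scope.

(* Optimal normalized download cost D* of the PIR-PSI problem under a storage
   constraint, for N databases, K messages and a caching scheme given by the
   sequence r = (r_1,...,r_M) of cached fractions (M = size r).  The paper's
   formula assumes r_1 >= ... >= r_M; for an arbitrary r we first sort it in
   nonincreasing order (the cost depends only on the multiset of fractions).        *)
Definition Dstar {R : realFieldType} (N K : nat) (r : seq R) : R :=
  let rs := sort (fun x y : R => y <= x) r in
  \sum_(i < K - size r) (N%:R ^+ i)^-1
  + \sum_(j < size r) (1 - nth 0 rs j) / N%:R ^+ (K - j.+1).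

Definition uniform_scheme {R : realFieldType} (K : nat) (S : R) : seq R :=
  nseq K (S / K%:R).

(* Main.v *)
Require Import Defs.
From HB Require Import structures.
From mathcomp Require Import all_boot all_order all_algebra.
From mathcomp Require Import zify ring lra.
Import Order.TTheory GRing.Theory Num.Theory.
Local Open Scope ring_scope.

Theorem corollary3 (R : realFieldType) (N K : nat) (S : R) (M : nat)
    (r : M.-tuple R) :
  (1 <= N)%N ->
  0 <= S -> S <= K%:R ->
  S <= M%:R -> (M <= K)%N ->
  (forall i : 'I_M, 0 <= tnth r i <= 1) ->
  \sum_(i < M) tnth r i = S ->
  Dstar N K (uniform_scheme K S) <= Dstar N K r.
Proof.
move=> N1 S0 SK SM MK r01 rS.
set rs := sort (fun x y : R => y <= x) r.
pose x j := nth 0 rs j.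
pose w j : R := (N%:R ^+ (K - j.+1))^-1.
have hsz : size rs = M by rewrite size_sort size_tuple.
have hrs01 : forall y, y \in rs -> 0 <= y.
  move=> y; rewrite mem_sort => /tnthP [i ->].
  by case/andP: (r01 i).
have hxz : forall j, (M <= j)%N -> x j = 0.
  by move=> j Mj; rewrite /x nth_default // hsz.
have hx0 : forall j, 0 <= x j.
  move=> j; case: (ltnP j M) => jM; last by rewrite hxz.
  by apply: hrs01; rewrite mem_nth // hsz.
have hxmono : forall i j, (i <= j)%N -> x j <= x i.
  move=> i j ij; case: (ltnP j M) => jM; last by rewrite hxz.
  have tr : transitive (fun x y : R => y <= x).
    by move=> a b c /= ba cb; apply: le_trans cb ba.
  have srt : sorted (fun x y : R => y <= x) rs.
    by apply: sort_sorted => a b; apply: le_total.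
  apply: (sorted_leq_nth tr (fun a => lexx a) 0 srt) => //.
  - by rewrite inE hsz; lia.
  - by rewrite inE hsz.
have Npos : 0 < N%:R :> R by rewrite ltr0n.
have hwpos : forall j, 0 < w j by move=> j; rewrite invr_gt0 exprn_gt0.
have hwmono : forall i j, (i <= j)%N -> w i <= w j.
  move=> i j ij; rewrite /w lef_pV2 ?posrE ?exprn_gt0 //.
  apply: ler_weXn2l; first by rewrite ler1n.
  lia.
have hsumx : \sum_(j < K) x j = S.
  rewrite -rS -(subnKC MK) big_split_ord /= [X in _ + X]big1 ?addr0; last first.
    by move=> j _; rewrite hxz // leq_addr.
  have -> : \sum_(i < M) tnth r i = \sum_(y <- r) y by rewrite big_tuple.
  rewrite -(perm_big _ (permEl (perm_sort (fun x y : R => y <= x) r))) /=.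
  by rewrite (big_nth 0) hsz big_mkord.
have hDr : Dstar N K r = \sum_(j < K) w j * (1 - x j).
  rewrite /Dstar -/rs size_tuple.
  rewrite -(big_mkord xpredT (fun j => w j * (1 - x j))).
  rewrite (big_cat_nat (leq0n M) MK) /= big_mkord addrC.
  congr (_ + _); last by apply: eq_bigr => j _; rewrite mulrC.
  rewrite [RHS](eq_big_nat _ _ (F2 := w)); last first.
    by move=> j /andP [Mj _]; rewrite hxz // subr0 mulr1.
  rewrite big_nat_rev.
  have -> : forall F : nat -> R, \sum_(M <= i < K) F i = \sum_(0 <= i < K - M) F (i + M).
    by move=> F; rewrite -(big_addn 0 K M xpredT F) add0n.
  rewrite big_mkord.
  apply: eq_bigr => [[j hj]] _ /=; rewrite /w; congr (_ ^- _); lia.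
have hDu : Dstar N K (uniform_scheme K S) = \sum_(j < K) w j * (1 - S / K%:R).
  rewrite /Dstar /uniform_scheme size_nseq subnn big_ord0 add0r.
  apply: eq_bigr => [[j hj]] _ /=.
  set us := sort _ _.
  have : us`_j \in us by rewrite mem_nth // size_sort size_nseq.
  rewrite mem_sort mem_nseq => /andP [_ /eqP ->].
  by rewrite mulrC.
have cheb : K%:R * \sum_(j < K) w j * x j <= (\sum_(j < K) w j) * (\sum_(j < K) x j).
  have H0 : \sum_(i < K) \sum_(j < K) (w i - w j) * (x i - x j) <= 0.
    apply: sumr_le0 => i _; apply: sumr_le0 => j _.
    case: (leqP i j) => ij.
      by apply: mulr_le0_ge0; rewrite ?subr_le0 ?subr_ge0; [apply: hwmono|apply: hxmono].
    by apply: mulr_ge0_le0; rewrite ?subr_le0 ?subr_ge0; [apply: hwmono|apply: hxmono]; apply: ltnW.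
  have E : \sum_(i < K) \sum_(j < K) (w i - w j) * (x i - x j) =
      (K%:R * \sum_(j < K) w j * x j) *+ 2 - ((\sum_(j < K) w j) * (\sum_(j < K) x j)) *+ 2.
    have E1 : forall i j : 'I_K, (w i - w j) * (x i - x j) =
        (w i * x i + w j * x j) - (w i * x j + w j * x i) by move=> i j; ring.
    under eq_bigr => i _ do rewrite (eq_bigr _ (fun j _ => E1 i j)) sumrB !big_split /=
       sumr_const card_ord -mulr_sumr -mulr_suml.
    rewrite sumrB !big_split /= sumr_const card_ord.
    rewrite sumrMnl -mulr_suml -mulr_sumr. ring.
  by move: H0; rewrite E subr_le0 lerMn2r.
rewrite hDu hDr.
have [K0|Kpos] := posnP K.
  by rewrite K0 !big_ord0.
have kpos : 0 < K%:R :> R by rewrite ltr0n.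
rewrite -mulr_suml.
have -> : \sum_(j < K) w j * (1 - x j) = \sum_(j < K) w j - \sum_(j < K) w j * x j.
  by rewrite -sumrB; apply: eq_bigr => j _; rewrite mulrBr mulr1.
rewrite hsumx in cheb.
have hP : \sum_(j < K) w j * x j <= (\sum_(j < K) w j) * S / K%:R.
  by rewrite ler_pdivlMr // mulrC.
rewrite mulrBr mulr1 mulrA lerD2l lerN2 //.
Qed.
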